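(* Let $v_0=\epsilon$ and for $i>0$ let $v_i=\bigl(v_{i-1}0v_{i-1}1v_{i-1}1v_{i-1}0v_{i-1}2v_{i-1}2\bigr)^{(+)}$ over $\{0,1,2\}$; each $v_{i-1}$ is a prefix of $v_i$, and let $\mathbf v=\lim_{i\to\infty}v_i$. Let $\varphi$ be the morphism $0\mapsto 0100$, $1\mapsto 01011$, $2\mapsto 010111$. Then $\mathbf v$ is rich and $D(\varphi(\mathbf v))=\infty$.
   Context: For a finite word $w$, $w^{(+)}$ denotes the shortest palindrome having $w$ as a prefix. The defect of a finite word $w$ is $D(w)=|w|+1-(\text{number of distinct palindromic factors of } w, \text{ including the empty word})$; the defect of an infinite word is the supremum of the defects of its prefixes. An infinite word is rich if its defect is $0$. *)

(* Defs.v *)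
From mathcomp Require Import all_boot.
Set Implicit Arguments. Unset Strict Implicit. Unset Printing Implicit Defensive.

(* Finite words are sequences of letters; letters are natural numbers
   (the words considered only use the letters 0, 1, 2). *)
Definition word := seq nat.
Definition iword := nat -> nat.

Definition pal (w : word) : bool := rev w == w.

(* w^(+): the shortest palindrome having w as a prefix.  Any palindrome
   with prefix w of length |w|+k (k <= |w|) is w ++ rev (take k w), and
   k = |w| always works, so we take the least such k. *)
Definition pclos (w : word) : word :=
  let k := find (fun k => pal (w ++ rev (take k w))) (iota 0 (size w).+1) in
  w ++ rev (take k w).

Definition factors (w : word) : seq word :=
  [seq take j (drop i w) | i <- iota 0 (size w).+1, j <- iota 0 (size w).+1].

(* number of distinct palindromic factors, including the empty word *)
Definition npal (w : word) : nat := size (undup [seq u <- factors w | pal u]).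

Definition defect (w : word) : nat := (size w).+1 - npal w.

Definition iprefix (x : iword) (n : nat) : word := mkseq x n.

Definition rich (x : iword) : Prop := forall n, defect (iprefix x n) = 0.

Definition infinite_defect (x : iword) : Prop :=
  forall m, exists n, m <= defect (iprefix x n).

Fixpoint vfin (i : nat) : word :=
  match i with
  | 0 => [::]
  | i'.+1 => let u := vfin i' in
      pclos (u ++ 0 :: u ++ 1 :: u ++ 1 :: u ++ 0 :: u ++ 2 :: u ++ [:: 2])
  end.

(* the limit word: letter n is read in v_{n+1} (which has length > n) *)
Definition vlim : iword := fun n => nth 0 (vfin n.+1) n.

Definition phi (a : nat) : word :=
  match a with
  | 0 => [:: 0; 1; 0; 0]
  | 1 => [:: 0; 1; 0; 1; 1]
  | _ => [:: 0; 1; 0; 1; 1; 1]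
  end.

Definition morph_word (f : nat -> word) (w : word) : word := flatten (map f w).

(* image of an infinite word under a non-erasing morphism f:
   letter m is read in f(x_0 ... x_m), which has length > m *)
Definition morph_iword (f : nat -> word) (x : iword) : iword :=
  fun m => nth 0 (morph_word f (iprefix x m.+1)) m.

(* Main.v *)
Require Import Defs.
From mathcomp Require Import all_boot zify.
Set Implicit Arguments. Unset Strict Implicit. Unset Printing Implicit Defensive.

Lemma mem_factors (u w : word) : (u \in factors w) = infix u w.
Proof.
apply/idP/idP.
- rewrite /factors => /allpairsP [[i j] /= [_ _ ->]].
  exact: (infix_trans (infix_take _ j) (infix_drop _ i)).
- move=> /infixP [s [s' ->]].
  have Hi : forall k n, k <= n -> k \in 0 :: iota 1 n.
    by move=> k n kn; rewrite -[0 :: _]/(iota 0 n.+1) mem_iota; lia.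
  apply/allpairsP; exists (size s, size u) => /=; rewrite !size_cat.
  split; [apply: Hi; lia|apply: Hi; lia|].
  by rewrite drop_size_cat // take_size_cat.
Qed.

Definition PF (w : word) := [seq u <- factors w | pal u].
Lemma mem_PF u w : (u \in PF w) = pal u && infix u w.
Proof. by rewrite mem_filter mem_factors. Qed.

Lemma size_undup_eqmem (s1 s2 : seq word) : s1 =i s2 -> size (undup s1) = size (undup s2).
Proof.
move=> H; apply: perm_size; apply: uniq_perm; rewrite ?undup_uniq // => x.
by rewrite !mem_undup H.
Qed.

Lemma size_undup_add (s1 s2 : seq word) t : t \notin s2 ->
  (forall x, (x \in s1) = (x \in s2) || (x == t)) -> size (undup s1) = (size (undup s2)).+1.
Proof.
move=> Ht H.
have -> : size (undup s1) = size (t :: undup s2).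
  apply: perm_size; apply: uniq_perm; rewrite ?undup_uniq //=.
  - by rewrite mem_undup Ht undup_uniq.
  - by move=> x; rewrite mem_undup H in_cons mem_undup orbC.
by [].
Qed.

Lemma pal_suffix_prefix (u v : word) : pal u -> pal v -> suffix u v -> prefix u v.
Proof. by move=> /eqP Hu /eqP Hv; rewrite -prefix_rev Hu Hv. Qed.

Lemma new_unique (w : word) a u1 u2 :
  suffix u1 (rcons w a) -> pal u1 -> ~~ infix u1 w ->
  suffix u2 (rcons w a) -> pal u2 -> ~~ infix u2 w -> u1 = u2.
Proof.
have key : forall x y, suffix x (rcons w a) -> pal x -> ~~ infix x w ->
   suffix y (rcons w a) -> pal y -> size x < size y -> False.
  move=> x y Sx Px Nx Sy Py Hlt.
  have Sxy : suffix x y.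
    move: Sx Sy; rewrite !suffixE => /eqP Ex /eqP Ey.
    have hx := congr1 size Ex; have hy := congr1 size Ey.
    rewrite size_drop in hx; rewrite size_drop in hy.
    apply/eqP.
    transitivity (drop (size y - size x) (drop (size (rcons w a) - size y) (rcons w a))); first by rewrite Ey.
    rewrite drop_drop -Ex; congr drop.
    rewrite size_drop; move: Hlt hx hy; set n := size (rcons w a); set sx := size x; set sy := size y; clear; lia.
  have /prefixP [r Er] := pal_suffix_prefix Px Py Sxy.
  case/suffixP: Sy => s Es.
  have : r != [::] by apply/eqP => r0; move: Hlt; rewrite Er r0 cats0 ltnn.
  case/lastP: r Er => [//|r b] Er _.
  move: Es; rewrite Er -rcons_cat -rcons_cat catA => /eqP; rewrite eqseq_rcons => /andP [/eqP Ew _].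
  by move: Nx; rewrite Ew -catA infix_infix.
move=> S1 P1 N1 S2 P2 N2.
case: (ltngtP (size u1) (size u2)) => H.
- by case: (key _ _ S1 P1 N1 S2 P2 H).
- by case: (key _ _ S2 P2 N2 S1 P1 H).
- move: S1 S2; rewrite !suffixE H => /eqP E1 /eqP E2; by rewrite -E1 E2.
Qed.

Lemma npal_new (w : word) a u : suffix u (rcons w a) -> pal u -> ~~ infix u w ->
  npal (rcons w a) = (npal w).+1.
Proof.
move=> Su Pu Nu; rewrite /npal; apply: (size_undup_add (t := u)).
  by rewrite mem_PF negb_and Nu orbT.
move=> x; rewrite !mem_PF infix_rconsl.
case Px: (pal x) => /=; last by apply/esym/eqP => E; move: Px; rewrite E Pu.
case Ix: (infix x w); rewrite ?orbT //= orbF.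
apply/idP/eqP => [Sx|->//].
exact: (new_unique Sx Px (negbT Ix) Su Pu Nu).
Qed.

Lemma npal_nonew (w : word) a : (forall u, suffix u (rcons w a) -> pal u -> infix u w) ->
  npal (rcons w a) = npal w.
Proof.
move=> H; rewrite /npal; apply: size_undup_eqmem => x; rewrite !mem_PF infix_rconsl.
case Px: (pal x) => //=.
case Sx: (suffix x (rcons w a)) => //=; by rewrite (H _ Sx Px).
Qed.

Lemma npal_le (w : word) : npal w <= (size w).+1.
Proof.
elim/last_ind: w => [|w a IH]; first by [].
rewrite size_rcons.
case: (boolP [exists k : 'I_(size w).+2, pal (drop k (rcons w a)) && ~~ infix (drop k (rcons w a)) w]).
- move=> /existsP [k /andP [Pk Nk]].
  by rewrite (npal_new (suffix_drop _ _) Pk Nk).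
- move=> /existsPn H. rewrite npal_nonew; first by lia.
  move=> u Su Pu; move: Su; rewrite suffixE => /eqP Eu.
  have hk : size (rcons w a) - size u < (size w).+2 by rewrite size_rcons; lia.
  have := H (Ordinal hk); rewrite /= Eu Pu /= negbK; done.
Qed.

Lemma defect_new (w : word) a u : suffix u (rcons w a) -> pal u -> ~~ infix u w ->
  defect (rcons w a) = defect w.
Proof. by move=> S P N; rewrite /defect (npal_new S P N) size_rcons. Qed.

Lemma defect_nonew (w : word) a : (forall u, suffix u (rcons w a) -> pal u -> infix u w) ->
  defect (rcons w a) = (defect w).+1.
Proof.
move=> H; rewrite /defect (npal_nonew H) size_rcons.
have := npal_le w; lia.
Qed.

Lemma defect_mono (w : word) a : defect w <= defect (rcons w a).
Proof.
case: (boolP [exists k : 'I_(size w).+2, pal (drop k (rcons w a)) && ~~ infix (drop k (rcons w a)) w]).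
- move=> /existsP [k /andP [Pk Nk]].
  by rewrite (defect_new (suffix_drop _ _) Pk Nk).
- move=> /existsPn H. rewrite defect_nonew //.
  move=> u Su Pu; move: Su; rewrite suffixE => /eqP Eu.
  have hk : size (rcons w a) - size u < (size w).+2 by rewrite size_rcons; lia.
  have := H (Ordinal hk); rewrite /= Eu Pu /= negbK; done.
Qed.

Lemma defect_nil : defect [::] = 0.
Proof. by []. Qed.


Definition xw : word := [:: 0; 1; 1; 0; 2; 2; 0; 1; 1; 0].

Fixpoint tzf (f n : nat) : nat :=
  match f with
  | 0 => 0
  | f'.+1 => if n %% 11 == 10 then tzf f' (n %/ 11) else nth 0 xw (n %% 11)
  end.
Definition tz n := tzf n.+1 n.

Lemma tzf_eq f g n : n < f -> n < g -> tzf f n = tzf g n.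
Proof.
elim: f g n => [|f IH] [|g] n //= Hf Hg.
case: ifP => // H.
apply: IH; lia.
Qed.

Lemma tzf_enough f n : n < f -> tzf f n = tz n.
Proof. by move=> H; apply: tzf_eq. Qed.

Lemma tz_rec n : tz n = if n %% 11 == 10 then tz (n %/ 11) else nth 0 xw (n %% 11).
Proof.
rewrite {1}/tz /=; case: ifP => // H; apply: tzf_enough; lia.
Qed.

Lemma tz10 j : tz (11 * j + 10) = tz j.
Proof. rewrite tz_rec; have -> : (11 * j + 10) %% 11 = 10 by lia. by have -> : (11 * j + 10) %/ 11 = j by lia. Qed.

Lemma tzr j r : r < 10 -> tz (11 * j + r) = nth 0 xw r.
Proof. move=> Hr; rewrite tz_rec; have -> : (11 * j + r) %% 11 = r by lia. by case: ifP => //; lia. Qed.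

Lemma tz_small r : r < 10 -> tz r = nth 0 xw r.
Proof. by move=> Hr; have := tzr 0 Hr; rewrite muln0 add0n. Qed.

Lemma tz_mod i : i %% 11 != 10 -> tz i = nth 0 xw (i %% 11).
Proof. by move=> H; rewrite tz_rec (negbTE H). Qed.

Lemma tz_mod10 i : i %% 11 = 10 -> tz i = tz (i %/ 11).
Proof. by move=> H; rewrite tz_rec H eqxx. Qed.

Lemma tz_le2 i : tz i <= 2.
Proof.
elim: i {-2}i (leqnn i) => [|n IH] i Hi; rewrite tz_rec.
  by have -> : i = 0 by lia.
case: ifP => H; first by apply: IH; lia.
have : i %% 11 < 11 by rewrite ltn_mod.
by move: (i %% 11) => [|[|[|[|[|[|[|[|[|[|[|]]]]]]]]]]].
Qed.

Lemma tz22 i : tz i = 2 -> tz i.+1 = 2 -> i %% 11 = 4.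
Proof.
move=> H1 H2.
have Hm : i %% 11 < 11 by rewrite ltn_mod.
case E: (i %% 11 == 10).
  move: H2; rewrite tz_mod; last by lia.
  by have -> : i.+1 %% 11 = 0 by lia.
move: H1; rewrite tz_mod ?E // => H1.
case E9: (i %% 11 == 9). by move: H1; rewrite (eqP E9).
move: H2; rewrite tz_mod; last by lia.
have -> : i.+1 %% 11 = (i %% 11).+1 by lia.
move: H1 Hm E E9; case: (i %% 11) => [|[|[|[|[|[|[|[|[|[|[|]]]]]]]]]]] //.
Qed.

Lemma tz_pal k i : i < 11 ^ k - 1 -> tz i = tz (11 ^ k - 2 - i).
Proof.
elim: k i => [|k IH] i Hi; first by move: Hi; rewrite expn0.
have Hp : 11 ^ k.+1 = 11 * 11 ^ k by rewrite expnS.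
have Hk : 0 < 11 ^ k by rewrite expn_gt0.
rewrite Hp in Hi *; move: Hk IH Hi; set K := 11 ^ k => Hk IH Hi.
case E: (i %% 11 == 10).
  have E' := eqP E.
  rewrite (tz_mod10 E') (tz_mod10 (i := 11 * K - 2 - i)); last by lia.
  rewrite IH; last by lia.
  congr tz; lia.
rewrite tz_mod ?E // tz_mod; last by lia.
have -> : (11 * K - 2 - i) %% 11 = 9 - i %% 11 by lia.
have : i %% 11 < 11 by rewrite ltn_mod.
move: E; case: (i %% 11) => [|[|[|[|[|[|[|[|[|[|[|]]]]]]]]]]] //.
Qed.

Lemma tz_block k a i : i < 11 ^ k - 1 -> tz (a * 11 ^ k + i) = tz i.
Proof.
elim: k a i => [|k IH] a i Hi; first by move: Hi; rewrite expn0.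
have Hp : 11 ^ k.+1 = 11 * 11 ^ k by rewrite expnS.
have Hk : 0 < 11 ^ k by rewrite expn_gt0.
rewrite Hp in Hi *; move: Hk IH Hi; set K := 11 ^ k => Hk IH Hi.
case E: (i %% 11 == 10).
  have E' := eqP E.
  rewrite (tz_mod10 E') (tz_mod10 (i := a * (11 * K) + i)); last by lia.
  rewrite -(IH a (i %/ 11)); last by lia.
  congr tz; lia.
rewrite (tz_mod (negbT E)) (tz_mod (i := a * (11 * K) + i)); last by lia.
congr nth; lia.
Qed.

Lemma tz_sep k t : 0 < t -> tz (t * 11 ^ k - 1) = tz (t - 1).
Proof.
move=> Ht; elim: k => [|k IH]; first by rewrite expn0 muln1.
have Hp : 11 ^ k.+1 = 11 * 11 ^ k by rewrite expnS.
have Hk : 0 < 11 ^ k by rewrite expn_gt0.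
rewrite Hp; move: Hk IH; set K := 11 ^ k => Hk IH.
rewrite tz_mod10; last by lia.
rewrite -IH; congr tz; lia.
Qed.

Lemma palP (s : word) :
  reflect (forall i, i < size s -> nth 0 s i = nth 0 s (size s - i.+1)) (pal s).
Proof.
rewrite /pal; apply: (iffP eqP) => [E i Hi | H].
  by rewrite -[in LHS]E nth_rev.
apply: (@eq_from_nth _ 0); rewrite ?size_rev // => i Hi.

by rewrite nth_rev // (H i Hi).
Qed.

Lemma eq_mkseq_nth (s : word) f n : size s = n -> (forall i, i < n -> nth 0 s i = f i) ->
  s = mkseq f n.
Proof.
move=> Hs H; apply: (@eq_from_nth _ 0); rewrite ?size_mkseq // => i Hi.
by rewrite nth_mkseq -?Hs // H // -Hs.
Qed.

Definition vk k : word := mkseq tz (11 ^ k - 1).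

Lemma pos11 k : 0 < 11 ^ k. Proof. by rewrite expn_gt0. Qed.


Definition blocks (v : word) (ls : seq nat) : word := flatten [seq v ++ [:: a] | a <- ls].

Lemma size_blocks v ls : size (blocks v ls) = size ls * (size v).+1.
Proof.
elim: ls => [|a ls IH] //=; rewrite size_cat IH size_cat /= addn1; lia.
Qed.

Lemma nth_blocks v ls t r : t < size ls -> r <= size v ->
  nth 0 (blocks v ls) (t * (size v).+1 + r) = if r < size v then nth 0 v r else nth 0 ls t.
Proof.
elim: ls t => [|a ls IH] [|t] //= Ht Hr.
- rewrite mul0n add0n nth_cat size_cat /= addn1 ltnS Hr nth_cat.
  case: ifP => // H; have -> : r = size v by lia. by rewrite subnn.
- rewrite nth_cat size_cat /= addn1.
  have -> : (t.+1 * (size v).+1 + r < (size v).+1) = false by lia.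
  have -> : t.+1 * (size v).+1 + r - (size v).+1 = t * (size v).+1 + r by lia.
  by apply: IH.
Qed.

Lemma uk_eq k : mkseq tz (6 * 11 ^ k) = blocks (vk k) [:: 0; 1; 1; 0; 2; 2].
Proof.
have HK := pos11 k; have Hsep := tz_sep k; have Hblock := @tz_block k.
rewrite /vk; move: HK Hsep Hblock; move: (11 ^ k) => K HK Hsep Hblock.
have Sv : size (mkseq tz (K - 1)) = K - 1 by rewrite size_mkseq.
apply/esym/eq_mkseq_nth.
  by rewrite size_blocks Sv /=; lia.
move=> i Hi.
have SK : (size (mkseq tz (K - 1))).+1 = K by rewrite Sv; lia.
have Ei : i = (i %/ K) * (size (mkseq tz (K - 1))).+1 + i %% K by rewrite SK; apply: divn_eq.
have Ht : i %/ K < 6 by rewrite ltn_divLR //; lia.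
have Hr : i %% K < K by rewrite ltn_mod.
rewrite Ei nth_blocks //; last by rewrite Sv; lia.
rewrite -Ei Sv.
case: ifP => H.
  by rewrite nth_mkseq // [in RHS](divn_eq i K) Hblock.
have Er : i = (i %/ K).+1 * K - 1 by have := divn_eq i K; lia.
rewrite [in RHS]Er Hsep // tz_small; last by lia.
by move: Ht; rewrite subn1 /=; case: (i %/ K) => [|[|[|[|[|[|]]]]]].
Qed.

Lemma PBnd k a : a < 6 * 11 ^ k ->
  (forall t, t < 6 * 11 ^ k - a -> tz (a + t) = tz (6 * 11 ^ k - 1 - t)) ->
  6 * 11 ^ k - a <= 11 ^ k + 1.
Proof.
elim: k a => [|k IH] a Ha H.
  rewrite expn0 in Ha H *.
  have := H 0; rewrite addn0 => /(_ ltac:(lia)).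
  rewrite (tz_small (r := 5)) // tz_small; last by lia.
  by move: Ha; clear; case: a => [|[|[|[|[|[|]]]]]].
have Hp : 11 ^ k.+1 = 11 * 11 ^ k by rewrite expnS.
have HK := pos11 k.
rewrite Hp in Ha H *; move: HK IH Ha H; move: (11 ^ k) => K HK IH Ha H.
case: (leqP (6 * (11 * K) - a) 11) => Hs; first by lia.
set t0 := (15 - a %% 11) %% 11.
have Ht0 : (a + t0) %% 11 = 4 by rewrite /t0; lia.
have T1 : tz (a + t0) = 2 by rewrite tz_mod ?Ht0.
have T2 : tz (a + t0).+1 = 2.
  rewrite tz_mod; have -> : (a + t0).+1 %% 11 = 5 by lia. by []. by [].
rewrite H in T1; last by rewrite /t0; lia.
rewrite -addnS H in T2; last by rewrite /t0; lia.
have E : (6 * (11 * K) - 1 - t0.+1) %% 11 = 4.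
  apply: tz22 => //.
  have -> : (6 * (11 * K) - 1 - t0.+1).+1 = 6 * (11 * K) - 1 - t0 by rewrite /t0; lia.
  by [].
have Ea : a %% 11 = 10 by move: E; rewrite /t0; lia.
have Ea' : a = 11 * (a %/ 11) + 10 by have := divn_eq a 11; lia.
have := IH (a %/ 11); move: Ea'; move: (a %/ 11) => a' Ea' IH'.
suff : 6 * K - a' <= K + 1 by lia.
apply: IH'; first by lia.
move=> t Ht.
rewrite -tz10 -(tz10 (6 * K - 1 - t)).
have -> : 11 * (a' + t) + 10 = a + 11 * t by lia.
rewrite H; last by lia.
congr tz; lia.
Qed.

Lemma find_iota_eq (P : pred nat) n K0 : K0 < n -> P K0 -> (forall k, k < K0 -> ~~ P k) ->
  find P (iota 0 n) = K0.
Proof.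
move=> Hn HP Hk.
have Hhas : has P (iota 0 n) by apply/hasP; exists K0 => //; rewrite mem_iota.
have Hf : find P (iota 0 n) < n by move: Hhas; rewrite has_find size_iota.
case: (ltngtP (find P (iota 0 n)) K0) => H //.
- have := nth_find 0 Hhas; rewrite nth_iota // add0n => HP'.
  by have := Hk _ H; rewrite HP'.
- have := before_find 0 H; rewrite nth_iota // ?add0n ?HP //; lia.
Qed.

Lemma pal_cat_rev (u : word) k : pal (u ++ rev (take k u)) -> pal (drop k u).
Proof.
rewrite /pal => /eqP E; apply/eqP.
move: E; set t := take k u; set r := drop k u.
have -> : u = t ++ r by rewrite cat_take_drop.
rewrite !rev_cat revK -!catA => /eqP.
rewrite eqseq_cat // => /andP [_].
rewrite eqseq_cat ?size_rev // => /andP [/eqP -> _] //.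
Qed.

Lemma blocks_eq (v : word) : v ++ 0 :: v ++ 1 :: v ++ 1 :: v ++ 0 :: v ++ 2 :: v ++ [:: 2] =
  blocks v [:: 0; 1; 1; 0; 2; 2].
Proof. by rewrite /blocks /= !cats0 -!catA. Qed.

Lemma pal_drop_tz N a : a < N -> pal (drop a (mkseq tz N)) ->
  forall t, t < N - a -> tz (a + t) = tz (N - 1 - t).
Proof.
move=> Ha /palP H t Ht.
have := H t; rewrite size_drop size_mkseq => /(_ Ht).
rewrite !nth_drop !nth_mkseq; try lia.
move=> ->; congr tz; lia.
Qed.

Lemma pal_tz k : pal (mkseq tz (11 ^ k - 1)).
Proof.
apply/palP => i; rewrite size_mkseq => Hi.
rewrite !nth_mkseq; try lia.
rewrite (tz_pal Hi); congr tz; lia.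
Qed.

Lemma pclos_uk k : pclos (mkseq tz (6 * 11 ^ k)) = mkseq tz (11 ^ k.+1 - 1).
Proof.
have Hp : 11 ^ k.+1 = 11 * 11 ^ k by rewrite expnS.
have HK := pos11 k.
have Hpal := pal_tz k.+1.
have Htp := @tz_pal k.+1.
have HPB := @PBnd k.
rewrite Hp in Hpal Htp *.
move: HK Hpal Htp HPB; move: (11 ^ k) => K HK Hpal Htp HPB.
set u := mkseq tz (6 * K).
have Su : size u = 6 * K by rewrite size_mkseq.
have Hclos : u ++ rev (take (5 * K - 1) u) = mkseq tz (11 * K - 1).
  apply: eq_mkseq_nth; first by rewrite size_cat size_rev size_take Su; case: ifP; lia.
  move=> i Hi; rewrite nth_cat Su.
  case: ifP => H1; first by rewrite nth_mkseq.
  rewrite nth_rev; last by rewrite size_take Su; case: ifP; lia.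
  rewrite size_take Su; have -> : (5 * K - 1 < 6 * K) = true by lia.
  rewrite nth_take; last by lia.
  rewrite nth_mkseq; last by lia.
  rewrite (Htp i); last by lia.
  congr tz; lia.
rewrite /pclos.
have -> : find (fun k0 => pal (u ++ rev (take k0 u))) (iota 0 (size u).+1) = 5 * K - 1.
  apply: find_iota_eq; first by rewrite Su; lia.
    by rewrite /= Hclos.
  move=> k' Hk'; apply/negP => /pal_cat_rev Hd.
  have Hk6 : k' < 6 * K by lia.
  have := HPB k' Hk6 (pal_drop_tz Hk6 Hd). lia.
exact: Hclos.
Qed.

Lemma vfin_eq k : vfin k = vk k.
Proof.
elim: k => [|k IH] //=.
by rewrite IH blocks_eq -uk_eq pclos_uk.
Qed.


Definition occ_at (a L b : nat) := forall t, t <= L -> tz (b + t) = tz (a + t).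
Definition palint a n := forall t, t <= n - a -> tz (a + t) = tz (n - t).
Definition newstep n := exists a, a <= n /\ palint a n /\ forall b, b < a -> ~ occ_at a (n - a) b.

Lemma xw_pal r : r <= 9 -> nth 0 xw r = nth 0 xw (9 - r).
Proof. by case: r => [|[|[|[|[|[|[|[|[|[|]]]]]]]]]]. Qed.

Lemma tz_pal_lift a n : a <= n -> (a + n) %% 11 = 9 ->
  (forall i, a <= i <= n -> i %% 11 = 10 -> tz i = tz (a + n - i)) -> palint a n.
Proof.
move=> Han Hc H t Ht.
case E: ((a + t) %% 11 == 10).
  rewrite H; first (congr tz; lia); lia.
rewrite tz_mod ?E // tz_mod; last by lia.
have -> : (n - t) %% 11 = 9 - (a + t) %% 11 by lia.
apply: xw_pal; lia.
Qed.

Lemma align A b L : 11 <= L -> occ_at A L b -> b %% 11 = A %% 11.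
Proof.
move=> HL H.
set t0 := (15 - A %% 11) %% 11.
have Ht0 : (A + t0) %% 11 = 4 by rewrite /t0; lia.
have T1 : tz (A + t0) = 2 by rewrite tz_mod ?Ht0.
have T2 : tz (A + t0.+1) = 2.
  rewrite tz_mod; have -> : (A + t0.+1) %% 11 = 5 by lia. by []. by [].
rewrite -H in T1; last by rewrite /t0; lia.
rewrite -H in T2; last by rewrite /t0; lia.
have := tz22 T1; rewrite -addnS => /(_ T2).
rewrite /t0; lia.
Qed.

Definition Wd r y L : word :=
  mkseq (fun t => if (r + t) %% 11 == 10 then y else nth 0 xw ((r + t) %% 11)) L.

Definition chk (P : word) c (ds : seq nat) :=
  all (fun r => all (fun y => (Wd r y (size P) == P) ==> ((y == c) && has (fun d => (r + d) %% 11 == 10) ds))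
     [:: 0; 1; 2]) (iota 0 11).

Lemma local_pat (P : word) c ds b : size P <= 11 -> all (fun d => d < size P) ds -> chk P c ds ->
  (forall t, t < size P -> tz (b + t) = nth 0 P t) ->
  exists d, [/\ d \in ds, (b + d) %% 11 = 10 & tz (b + d) = c].
Proof.
move=> HP Hds Hchk H.
set r := b %% 11.
have Hr : r < 11 by rewrite ltn_mod.
set t0 := find (fun t => (r + t) %% 11 == 10) (iota 0 (size P)).
set y := if t0 < size P then tz (b + t0) else (if c == 0 then 1 else 0).
have Hy : y \in [:: 0; 1; 2].
  rewrite /y; case: ifP => _; last by case: (c == 0).
  by have := tz_le2 (b + t0); case: (tz _) => [|[|[|]]].
have HW : Wd r y (size P) = P.
  apply/esym/eq_mkseq_nth => // t Ht.
  case: ifP => Ht10.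
  - have Hhas : has (fun t => (r + t) %% 11 == 10) (iota 0 (size P)).
      by apply/hasP; exists t; rewrite ?mem_iota //.
    have Ht0 : t0 < size P by move: Hhas; rewrite has_find size_iota.
    have := nth_find 0 Hhas; rewrite -/t0 nth_iota // add0n => Hf.
    have Et : t0 = t by lia.
    by rewrite /y Ht0 Et H.
  - rewrite -H // tz_mod; last by lia.
    congr nth; lia.
have := allP Hchk r; rewrite mem_iota => /(_ ltac:(lia)) /allP /(_ y Hy).
rewrite HW eqxx /= => /andP [/eqP Eyc /hasP [d Hd Hd10]].
have Hb : (b + d) %% 11 = 10 by lia.
have Hdl : d < size P by apply: (allP Hds).
have Hhas : has (fun t => (r + t) %% 11 == 10) (iota 0 (size P)).
  by apply/hasP; exists d; rewrite ?mem_iota //.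
have Ht0 : t0 < size P by move: Hhas; rewrite has_find size_iota.
have := nth_find 0 Hhas; rewrite -/t0 nth_iota // add0n => Hf.
have Et : t0 = d by lia.
exists d; split => //.
by move: Eyc; rewrite /y Ht0 Et.
Qed.

Lemma chk_tests : [&& chk [:: 0; 0] 0 [:: 0; 1], chk [:: 1; 0; 1] 1 [:: 0; 2],
  chk [:: 2; 0; 1; 1; 0; 2] 2 [:: 0; 5], chk [:: 0; 0; 0] 0 [:: 1],
  chk [:: 0; 1; 0] 1 [:: 1] & chk [:: 0; 2; 0] 2 [:: 1]].
Proof. by vm_compute. Qed.

Definition palb a n := all (fun t => tz (a + t) == tz (n - t)) (iota 0 (n - a).+1).
Definition occb a L b := all (fun t => tz (b + t) == tz (a + t)) (iota 0 L.+1).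
Definition newb n := has (fun a => (a <= n) && palb a n && all (fun b => ~~ occb a (n - a) b) (iota 0 a))
  (iota 0 n.+1).

Lemma newbP n : newb n -> newstep n.
Proof.
move=> /hasP [a _ /andP [/andP [Ha Hp] Hb]].
exists a; split => //; split.
  move=> t Ht; apply/eqP; apply: (allP Hp); rewrite mem_iota; lia.
move=> b Hb' Hocc.
have := allP Hb b; rewrite mem_iota => /(_ ltac:(lia)) /negP; apply.
apply/allP => t; rewrite mem_iota => Ht; apply/eqP; apply: Hocc; lia.
Qed.

Lemma newstep_small n : n < 10 -> newstep n.
Proof.
move=> Hn; apply: newbP.
by move: n Hn; do 10?case => //; move=> _; vm_compute.
Qed.

Lemma short_witness n j c m ds : n = 11 * j + 10 -> tz j = c ->
  (forall b, b < j -> tz b <> c) -> 2 <= m <= 11 ->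
  pal (rcons (drop (11 - m) xw) c) -> all (fun d => d < m) ds ->
  chk (rcons (drop (11 - m) xw) c) c ds -> newstep n.
Proof.
move=> Hn Hc Hnew Hm Hpal Hds Hchk.
set P := rcons (drop (11 - m) xw) c.
have SP : size P = m by rewrite size_rcons size_drop /=; lia.
have HtP : forall t, t < m -> tz (n + 1 - m + t) = nth 0 P t.
  move=> t Ht; rewrite nth_rcons size_drop /=.
  case: ifP => H1.
    rewrite nth_drop; have -> : n + 1 - m + t = 11 * j + (11 - m + t) by lia.
    by rewrite tzr //; lia.
  have -> : t = m - 1 by lia.
  have -> : n + 1 - m + (m - 1) = 11 * j + 10 by lia. have -> : (m - 1 == 10 - (11 - m)) = true by apply/eqP; lia.
  by rewrite tz10.
exists (n + 1 - m); split; first by lia.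
split.
  move=> t Ht; rewrite HtP; last by lia.
  move/palP: Hpal; rewrite -/P SP => Hp.
  rewrite Hp; last by lia.
  have -> : n - t = n + 1 - m + (m - (t.+1)) by lia.
  by rewrite HtP; last by lia.
move=> b Hb Hocc.
have := @local_pat P c ds b; rewrite SP => /(_ ltac:(lia) Hds Hchk).
case.
  move=> t Ht; rewrite Hocc; last by lia. by apply: HtP.
move=> d [Hd Hd10 Hdc].
have Hdm : d < m by apply: (allP Hds).
apply: (Hnew ((b + d) %/ 11)); first by lia.
by rewrite -tz_mod10.
Qed.

Lemma newletter j : (forall b, b < j -> ~ occ_at j (j - j) b) -> forall b, b < j -> tz b <> tz j.
Proof.
move=> H b Hb E; apply: (H b Hb) => t; rewrite subnn leqn0 => /eqP ->; by rewrite !addn0.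
Qed.

Lemma newstep_all n : newstep n.
Proof.
elim: n {-2}n (leqnn n) => [|N IHN] n Hn.
  by apply: newstep_small; lia.
have IH : forall m, m < n -> newstep m by move=> m Hm; apply: IHN; lia.
case: (ltnP n 10) => Hn10; first by apply: newstep_small.
set j := n %/ 11; set r := n %% 11.
have Hnj : n = 11 * j + r by rewrite /j /r; have := divn_eq n 11; lia.
have Hr : r < 11 by rewrite ltn_mod.
case: (eqVneq r 10) => Hr10.
-
  have [a' [Ha' [Hpal Hnew]]] := IH j ltac:(lia).
  case: (ltnP a' j) => Ha'j.
  + exists (11 * a' + 10); split; first by lia.
    split.
      apply: tz_pal_lift; [lia|lia|].
      move=> i Hi Hi10.
      rewrite (tz_mod10 Hi10) (tz_mod10 (i := 11 * a' + 10 + n - i)); last by lia.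
      have := Hpal (i %/ 11 - a'); rewrite -> subnKC by lia.
      move=> -> ; last by lia.
      congr tz; lia.
    move=> b Hb Hocc.
    have Hb10 : b %% 11 = 10.
      have HL : 11 <= n - (11 * a' + 10) by lia.
      have := align HL Hocc; lia.
    apply: (Hnew (b %/ 11)); first by lia.
    move=> u Hu.
    rewrite -tz10 -(tz10 (a' + u)).
    have -> : 11 * (b %/ 11 + u) + 10 = b + 11 * u by lia.
    rewrite Hocc; last by lia.
    congr tz; lia.
  + have Eaj : a' = j by lia.
    rewrite Eaj in Hnew.
    have Hnl := newletter Hnew.
    have := tz_le2 j.
    case Ec: (tz j) => [|[|[|//]]] _.
    * apply: (@short_witness n j 0 2 [:: 0; 1]) => //; try lia.
      by rewrite -Ec; apply: Hnl.
    * apply: (@short_witness n j 1 3 [:: 0; 2]) => //; try lia.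
      by rewrite -Ec; apply: Hnl.
    * apply: (@short_witness n j 2 6 [:: 0; 5]) => //; try lia.
      by rewrite -Ec; apply: Hnl.
- have Hr9 : r <= 9 by lia.
  have Hj1 : 1 <= j by lia.
  have [a' [Ha' [Hpal Hnew]]] := IH (j - 1) ltac:(lia).
  case: (ltnP a' (j - 1)) => Ha'j.
  + exists (11 * a' + 9 - r); split; first by lia.
    split.
      apply: tz_pal_lift; [lia|lia|].
      move=> i Hi Hi10.
      rewrite (tz_mod10 Hi10) (tz_mod10 (i := 11 * a' + 9 - r + n - i)); last by lia.
      have := Hpal (i %/ 11 - a'); rewrite -> subnKC by lia.
      move=> -> ; last by lia.
      congr tz; lia.
    move=> b Hb Hocc.
    have Hb10 : b %% 11 = 9 - r.
      have HL : 11 <= n - (11 * a' + 9 - r) by lia.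
      have := align HL Hocc; lia.
    apply: (Hnew (b %/ 11)); first by lia.
    move=> u Hu.
    rewrite -tz10 -(tz10 (a' + u)).
    have -> : 11 * (b %/ 11 + u) + 10 = b + (11 * u + r + 1) by lia.
    rewrite Hocc; last by lia.
    congr tz; lia.
  + have Eaj : a' = j - 1 by lia.
    rewrite Eaj in Hnew.
    have Hnl := newletter Hnew.
    set c := tz (j - 1).
    exists (11 * (j - 1) + 9 - r); split; first by lia.
    split.
      apply: tz_pal_lift; [lia|lia|].
      move=> i Hi Hi10.
      have -> : i = 11 * (j - 1) + 10 by lia.
      congr tz; lia.
    move=> b Hb Hocc.
    have Hc3 : c <= 2 by apply: tz_le2.
    have := @local_pat [:: 0; c; 0] c [:: 1] (b + r) isT isT.
    case.
      by move: Hc3; case: (c) => [|[|[|]]] //; have := chk_tests; rewrite /= => /and5P[].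
      move=> t; rewrite /= => Ht.
      rewrite -addnA Hocc; last by lia.
      move: Ht; case: t => [|[|[|//]]] _ /=.
      - rewrite tz_mod; last by lia.
        by have -> : (11 * (j - 1) + 9 - r + (r + 0)) %% 11 = 9 by lia.
      - have -> : 11 * (j - 1) + 9 - r + (r + 1) = 11 * (j - 1) + 10 by lia.
        by rewrite tz10.
      - rewrite tz_mod; last by lia.
        by have -> : (11 * (j - 1) + 9 - r + (r + 2)) %% 11 = 0 by lia.
    move=> d [Hd Hd10 Hdc].
    move: Hd; rewrite inE => /eqP Ed; subst d.
    apply: (Hnl ((b + r + 1) %/ 11)); first by lia.
    by rewrite -tz_mod10.
Qed.


Lemma big11 n : n < 11 ^ n.+1 - 1.
Proof. have := ltn_expl n.+1 (isT : 1 < 11); lia. Qed.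

Lemma vlim_tz n : vlim n = tz n.
Proof. by rewrite /vlim vfin_eq /vk nth_mkseq // big11. Qed.

Lemma iprefix_tz n : iprefix vlim n = mkseq tz n.
Proof. by apply: eq_mkseq => i; rewrite vlim_tz. Qed.

Lemma rich_vlim : rich vlim.
Proof.
move=> n; rewrite iprefix_tz; elim: n => [|n IH] //.
rewrite mkseqS.
have [a [Ha [Hpal Hnew]]] := newstep_all n.
set w := mkseq tz n.+1.
have Hw : w = rcons (mkseq tz n) (tz n) by rewrite /w mkseqS.
have Su : size (drop a w) = n.+1 - a by rewrite size_drop size_mkseq.
have Hnth : forall t, t < n.+1 - a -> nth 0 (drop a w) t = tz (a + t).
  by move=> t Ht; rewrite nth_drop nth_mkseq //; lia.
rewrite (defect_new (u := drop a w)) //.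
- by rewrite -Hw suffix_drop.
- apply/palP => t; rewrite Su => Ht.
  rewrite !Hnth; try lia.
  rewrite Hpal; last by lia.
  congr tz; lia.
- apply/negP => /infixP [s [s' E]].
  have Hs : size s + (n.+1 - a) <= n by have := congr1 size E; rewrite !size_cat Su size_mkseq; lia.
  apply: (Hnew (size s)); first by lia.
  move=> t Ht.
  rewrite -Hnth; last by lia.
  rewrite -(@nth_mkseq _ 0 tz n (size s + t)); last by lia.
  by rewrite E nth_cat ltnNge leq_addr /= addKn nth_cat Su ifT //; lia.
Qed.


Definition sl (a : nat) : word := match a with 0 => [:: 0] | 1 => [:: 1; 1] | _ => [:: 1; 1; 1] end.
Notation phw := (morph_word phi).
Definition o10 : word := [:: 0; 1; 0].

Lemma phi_sl a : phi a = o10 ++ sl a.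
Proof. by case: a => [|[|]]. Qed.

Lemma phw_cat u v : phw (u ++ v) = phw u ++ phw v.
Proof. by rewrite /morph_word map_cat flatten_cat. Qed.

Lemma phw_cons a u : phw (a :: u) = phi a ++ phw u.
Proof. by []. Qed.

Lemma phw_nil : phw [::] = [::]. Proof. by []. Qed.

Lemma pal_sl a : rev (sl a) = sl a. Proof. by case: a => [|[|]]. Qed.

Lemma phw_rev w : rev (phw w ++ o10) = phw (rev w) ++ o10.
Proof.
elim: w => [|a w IH] //.
rewrite phw_cons phi_sl -!catA !rev_cat -catA.
rewrite !catA -rev_cat IH rev_cons -cats1 phw_cat phw_cons phw_nil cats0 phi_sl pal_sl.
by rewrite -!catA.
Qed.

Lemma size_phi a : 4 <= size (phi a). Proof. by case: a => [|[|]]. Qed.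

Lemma size_phw_ge w : 4 * size w <= size (phw w).
Proof.
elim: w => [|a w IH] //=; rewrite phw_cons size_cat; have := size_phi a; lia.
Qed.

Lemma prefix_nth (u v : word) i : prefix u v -> i < size u -> nth 0 u i = nth 0 v i.
Proof. by move=> /prefixP [r ->] Hi; rewrite nth_cat Hi. Qed.

Lemma mkseq_prefix (f : nat -> nat) m n : m <= n -> prefix (mkseq f m) (mkseq f n).
Proof.
move=> Hmn; apply/prefixP; exists (mkseq (fun i => f (m + i)) (n - m)).
apply: (@eq_from_nth _ 0); rewrite ?size_cat !size_mkseq; first by lia.
move=> i Hi; rewrite nth_cat size_mkseq.
case: ifP => H; first by rewrite !nth_mkseq.
rewrite !nth_mkseq; try lia. congr f; lia.
Qed.

Lemma phw_prefix (u v : word) : prefix u v -> prefix (phw u) (phw v).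
Proof. by move=> /prefixP [r ->]; rewrite phw_cat prefix_prefix. Qed.

Lemma iprefix_phi m N : N <= size (phw (mkseq tz m)) ->
  iprefix (morph_iword phi vlim) N = take N (phw (mkseq tz m)).
Proof.
move=> HN; apply: (@eq_from_nth _ 0); rewrite size_mkseq ?size_take; first by case: ifP; lia.
move=> i Hi; rewrite nth_mkseq // nth_take // /morph_iword iprefix_tz.
case: (leqP i.+1 m) => H.
- apply: prefix_nth; first by apply: phw_prefix; apply: mkseq_prefix.
  have := size_phw_ge (mkseq tz i.+1); rewrite size_mkseq; lia.
- apply/esym/prefix_nth; first by apply: phw_prefix; apply: mkseq_prefix; lia.
  lia.
Qed.

Lemma nth_catR (s t : word) d : nth 0 (s ++ t) (size s + d) = nth 0 t d.
Proof. by elim: s. Qed.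

Lemma start010 (W Y : word) : exists Z, phw W ++ o10 ++ Y = o10 ++ Z.
Proof.
case: W => [|b W]; first by exists Y.
by exists (sl b ++ phw W ++ o10 ++ Y); rewrite phw_cons phi_sl -!catA.
Qed.

Lemma R0 (W Y A B : word) : all (fun x => x <= 2) W -> phw W ++ o10 ++ Y = A ++ o10 ++ B ->
  size A <= size (phw W) -> exists m, m <= size W /\ A = phw (take m W).
Proof.
elim: W A => [|a W IH] A HW E HA.
  by exists 0; split => //; case: A HA E.
case: A E HA => [|x A'] E HA; first by exists 0.
move: HW => /= /andP [Ha HW].
set A := x :: A' in E HA *.
case: (leqP (size (phi a)) (size A)) => Hs.
- have Htk : take (size (phi a)) A = phi a.
    have := congr1 (take (size (phi a))) E.
    rewrite phw_cons -catA take_size_cat // => Ht.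
    transitivity (take (size (phi a)) (A ++ o10 ++ B)); last exact (esym Ht).
    rewrite take_cat; case: ifP => // H.
    have Heq : size (phi a) = size A by lia.
    by rewrite Heq subnn take0 cats0 take_size.
  have EA : A = phi a ++ drop (size (phi a)) A by rewrite -{1}(cat_take_drop (size (phi a)) A) Htk.
  rewrite EA phw_cons -!catA in E.
  move: E => /eqP; rewrite eqseq_cat // => /andP [_ /eqP E].
  have HA' : size (drop (size (phi a)) A) <= size (phw W).
    by move: HA; rewrite phw_cons size_cat size_drop; lia.
  have [m [Hm Em]] := IH _ HW E HA'.
  exists m.+1; split; first by rewrite /=; lia.
  by rewrite EA Em /= phw_cons.
- exfalso.
  have [Z EZ] := start010 W Y.
  move: E; rewrite phw_cons phi_sl -!catA EZ => E.
  set L := o10 ++ sl a ++ o10.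
  have E' : L ++ Z = A ++ o10 ++ B by rewrite /L -!catA.
  have Hi : 1 <= size A <= 2 + size (sl a).
    by move: Hs; rewrite phi_sl size_cat /A /=; lia.
  have HL : forall d, d < 3 -> nth 0 L (size A + d) = nth 0 o10 d.
    have SL : size L = 6 + size (sl a) by rewrite /L !size_cat /=; lia.
    move=> d Hd.
    have E2 : nth 0 (L ++ Z) (size A + d) = nth 0 (A ++ o10 ++ B) (size A + d) by rewrite E'.
    rewrite nth_cat ifT in E2; last by rewrite SL; lia.
    by rewrite E2 nth_catR nth_cat /= Hd.
  have := HL 0 isT; have := HL 1 isT; have := HL 2 isT.
  move: Hi; rewrite !addn0 /L.
  move: (size A) => i.
  clear -Ha; move: Ha; case: a => [|[|[|//]]] _; case: i => [|[|[|[|[|[|]]]]]] //.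
Qed.

Lemma sl_inj a b (Z1 Z2 : word) : a <= 2 -> b <= 2 -> sl a ++ o10 ++ Z1 = sl b ++ o10 ++ Z2 -> a = b.
Proof.
move=> Ha Hb E.
have E0 := congr1 (nth 0 ^~ 0) E; have E2 := congr1 (nth 0 ^~ 2) E.
move: Ha Hb E0 E2 => /=; clear E; case: a => [|[|[|//]]] _; case: b => [|[|[|//]]] _ //=.
Qed.

Lemma R1 (W V Y B : word) : all (fun x => x <= 2) W -> all (fun x => x <= 2) V ->
  phw W ++ o10 ++ Y = phw V ++ o10 ++ B -> size (phw V) <= size (phw W) -> prefix V W.
Proof.
elim: V W => [|b V IH] W HW HV E Hs; first by clear; case: W.
case: W HW E Hs => [|a W] HW E Hs.
  by move: Hs; rewrite phw_cons phw_nil size_cat /=; have := size_phi b; lia.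
move: HW HV => /= /andP [Ha HW] /andP [Hb HV].
move: E; rewrite !phw_cons !phi_sl -!catA => /eqP; rewrite eqseq_cat // => /andP [_ /eqP E].
have [Z1 E1] := start010 W Y; have [Z2 E2] := start010 V B.
have Eab : a = b by apply: (sl_inj (Z1 := Z1) (Z2 := Z2) Ha Hb); rewrite -E1 -E2.
subst b.
move: E => /eqP; rewrite eqseq_cat // => /andP [_ /eqP E].
rewrite /= eqxx /=; apply: IH => //.
by move: Hs; rewrite !phw_cons !size_cat; lia.
Qed.

Lemma Rp (W V Y A B : word) : all (fun x => x <= 2) W -> all (fun x => x <= 2) V ->
  phw W ++ o10 ++ Y = A ++ (phw V ++ o10) ++ B -> size A + size (phw V) <= size (phw W) ->
  exists m, [/\ m <= size W, A = phw (take m W) & prefix V (drop m W)].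
Proof.
move=> HW HV E Hs.
have [Z EZ] := start010 V B.
have [m [Hm Em]] : exists m, m <= size W /\ A = phw (take m W).
  apply: (@R0 W Y A Z) => //; first by rewrite E -catA EZ.
  lia.
exists m; split => //.
have HW' : all (fun x => x <= 2) (drop m W) by move: HW; rewrite -{1}(cat_take_drop m W) all_cat => /andP [].
apply: (@R1 _ _ Y B) => //.
  move: E; rewrite -{1}(cat_take_drop m W) phw_cat -catA Em => /eqP.
  by rewrite eqseq_cat // -catA => /andP [_ /eqP].
move: Hs; rewrite Em.
have := congr1 size (congr1 phw (cat_take_drop m W)); rewrite phw_cat size_cat; lia.
Qed.

Lemma vk_align k m : (forall t, t < 11 ^ k - 1 -> tz (m + t) = tz t) -> 11 ^ k %| m.
Proof.
elim: k m => [|k IH] m H; first by rewrite expn0 dvd1n.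
have Hp : 11 ^ k.+1 = 11 * 11 ^ k by rewrite expnS.
have HK := pos11 k.
rewrite Hp in H *; move: HK IH H; move: (11 ^ k) => K HK IH H.
have H4 := H 4 ltac:(lia); have H5 := H 5 ltac:(lia).
rewrite (tz_small (r := 4)) // in H4; rewrite (tz_small (r := 5)) // in H5.
rewrite -addSnnS in H5.
have Hm : (m + 4) %% 11 = 4 by apply: tz22.
have Em : m = 11 * (m %/ 11) by have := divn_eq m 11; lia.
rewrite Em; apply: dvdn_mul => //.
apply: IH => t Ht.
rewrite -tz10 -(tz10 t).
have -> : 11 * (m %/ 11 + t) + 10 = m + (11 * t + 10) by lia.
apply: H; lia.
Qed.

Definition ls5 : seq nat := [:: 0; 1; 1; 0; 2].
Definition PB (p : word) (l : seq nat) : word := flatten [seq p ++ sl a | a <- l].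

Lemma phw_blocks (V : word) l : phw (blocks V l) = PB (phw V ++ o10) l.
Proof.
elim: l => [|a l IH] //.
have -> : blocks V (a :: l) = (V ++ [:: a]) ++ blocks V l by [].
have -> : PB (phw V ++ o10) (a :: l) = ((phw V ++ o10) ++ sl a) ++ PB (phw V ++ o10) l by [].
by rewrite phw_cat IH phw_cat phw_cons phw_nil cats0 phi_sl -!catA.
Qed.

Lemma blocks_cons (V : word) a l : blocks V (a :: l) = (V ++ [:: a]) ++ blocks V l.
Proof. by []. Qed.

Lemma take_blocks (V r : word) l t : t <= size l ->
  take (t * (size V).+1) (blocks V l ++ r) = blocks V (take t l).
Proof.
elim: l t => [|a l IH] [|t] Ht; rewrite ?mul0n ?take0 //.
rewrite /= !blocks_cons -catA take_cat size_cat /= addn1.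
have -> : (t.+1 * (size V).+1 < (size V).+1) = false by lia.
have -> : t.+1 * (size V).+1 - (size V).+1 = t * (size V).+1 by lia.
rewrite IH //.
Qed.

Lemma W_eq k : blocks (vk k) ls5 ++ vk k = mkseq tz (6 * 11 ^ k - 1).
Proof.
have HK := pos11 k.
have E : mkseq tz (6 * 11 ^ k) = (blocks (vk k) ls5 ++ vk k) ++ [:: 2].
  by rewrite uk_eq /blocks /= !cats0 -!catA.
have Hs : size (blocks (vk k) ls5 ++ vk k) = 6 * 11 ^ k - 1.
  by rewrite size_cat size_blocks size_mkseq /=; lia.
apply: (@eq_from_nth _ 0); rewrite ?size_mkseq // => i Hi.
have := congr1 (fun s => nth 0 s i) E; rewrite /= nth_mkseq; last by lia.
rewrite nth_cat Hs ifT; last by rewrite Hs in Hi.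
rewrite nth_mkseq //; rewrite Hs in Hi; by [].
Qed.

Lemma suffix_le (a b c : word) : suffix a c -> suffix b c -> size a <= size b -> suffix a b.
Proof.
rewrite !suffixE => /eqP Ea /eqP Eb Hs.
have ha := congr1 size Ea; have hb := congr1 size Eb.
rewrite size_drop in ha; rewrite size_drop in hb.
apply/eqP.
transitivity (drop (size b - size a) (drop (size c - size b) c)); first by rewrite Eb.
rewrite drop_drop -Ea; congr drop.
move: Hs ha hb; set n := size c; set sa := size a; set sb := size b.
rewrite size_drop; clear; lia.
Qed.

Lemma nth_at (s t : word) i : i = size s -> nth 0 (s ++ t) i = nth 0 t 0.
Proof. by move=> ->; rewrite -(addn0 (size s)) nth_catR. Qed.

Lemma all_tz n : all (fun x => x <= 2) (mkseq tz n).
Proof. by apply/allP => x /mapP [i _ ->]; apply: tz_le2. Qed.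

Lemma occ_p k (Y A B : word) :
  phw (blocks (vk k) ls5 ++ vk k) ++ o10 ++ Y = A ++ (phw (vk k) ++ o10) ++ B ->
  size A + size (phw (vk k)) <= size (phw (blocks (vk k) ls5 ++ vk k)) ->
  exists t, t <= 5 /\ A = PB (phw (vk k) ++ o10) (take t ls5).
Proof.
move=> E Hs.
have HW := W_eq k.
have HK := pos11 k.
have SV : size (vk k) = 11 ^ k - 1 by rewrite size_mkseq.
rewrite HW in E Hs.
have [m [Hmle Em Hpre]] := Rp (all_tz _) (all_tz _) E Hs.
rewrite size_mkseq in Hmle.
have Hsz : size (vk k) <= size (drop m (mkseq tz (6 * 11 ^ k - 1))) by apply: size_prefix.
rewrite size_drop size_mkseq SV in Hsz.
have Hdiv : 11 ^ k %| m.
  apply: vk_align => t Ht.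
  have := prefix_nth (i := t) Hpre; rewrite size_mkseq => /(_ Ht).
  rewrite nth_drop !nth_mkseq //; lia.
case/dvdnP: Hdiv => t Et.
have Ht5 : t <= 5.
  have : t * 11 ^ k < 6 * 11 ^ k.
    move: Hmle; rewrite Et; move: (t * 11 ^ k) => X; move: (11 ^ k) HK => K HK; lia.
  by rewrite ltn_pmul2r.
exists t; split => //.
rewrite Em -HW Et.
have -> : 11 ^ k = (size (vk k)).+1 by rewrite SV; lia.
rewrite take_blocks //.
by rewrite phw_blocks.
Qed.

Lemma PB_cat p l1 l2 : PB p (l1 ++ l2) = PB p l1 ++ PB p l2.
Proof. by rewrite /PB map_cat flatten_cat. Qed.

Lemma p_pal k p : p = phw (vk k) ++ o10 -> rev p = p.
Proof.
move=> ->; rewrite phw_rev; have := pal_tz k; rewrite /pal => /eqP.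
by rewrite -/(vk k) => ->.
Qed.

Lemma p0 k p t : p = phw (vk k) ++ o10 -> nth 0 (p ++ t) 0 = 0.
Proof. by move=> ->; case: (vk k) => [|a v] //; rewrite phw_cons phi_sl. Qed.

Lemma HPB p : PB p ls5 = p ++ [:: 0] ++ p ++ [:: 1; 1] ++ p ++ [:: 1; 1] ++ p ++ [:: 0] ++ p ++ [:: 1; 1; 1].
Proof. by rewrite /PB /= -!catA cats0. Qed.

Lemma HWp k p : p = phw (vk k) ++ o10 -> phw (blocks (vk k) ls5 ++ vk k) ++ o10 = PB p ls5 ++ p.
Proof. by move=> ->; rewrite phw_cat phw_blocks -catA. Qed.

Lemma PB_split p t : PB p ls5 = PB p (take t ls5) ++ PB p (drop t ls5).
Proof. by rewrite -PB_cat cat_take_drop. Qed.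

Lemma rev_pal3 (a b p : word) : rev p = p -> rev a = a -> rev b = b -> rev (a ++ p ++ b) = b ++ p ++ a.
Proof. by move=> Hp Ha Hb; rewrite (rev_cat a (p ++ b)) (rev_cat p b) Hp Ha Hb catA. Qed.

Lemma step_a k (p u : word) : p = phw (vk k) ++ o10 ->
  suffix u (PB p ls5 ++ p ++ [:: 1]) -> pal u -> infix u (PB p ls5 ++ p).
Proof.
move=> Hp Su Pu.
have Ppal := p_pal Hp.
have Sp : size p = size (phw (vk k)) + 3 by rewrite Hp size_cat.
case: (leqP (size u) (size p + 2)) => Hu.
- set S := [:: 1] ++ p ++ [:: 1].
  have SS : suffix S (PB p ls5 ++ p ++ [:: 1]).
    apply/suffixP; exists (p ++ [:: 0] ++ p ++ [:: 1; 1] ++ p ++ [:: 1; 1] ++ p ++ [:: 0] ++ p ++ [:: 1; 1]).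
    by rewrite HPB /S -!catA.
  have Hus : suffix u S by apply: (suffix_le Su SS); rewrite /S !size_cat /=; lia.
  have PS : pal S by rewrite /pal /S rev_pal3.
  apply: (infix_trans (prefixW (pal_suffix_prefix Pu PS Hus))).
  apply/infixP; exists (p ++ [:: 0] ++ p ++ [:: 1]), ([:: 1] ++ p ++ [:: 0] ++ p ++ [:: 1; 1; 1] ++ p).
  by rewrite HPB /S -!catA.
- exfalso.
  set S3 := [:: 1; 1] ++ p ++ [:: 1].
  have SS : suffix S3 (PB p ls5 ++ p ++ [:: 1]).
    apply/suffixP; exists (p ++ [:: 0] ++ p ++ [:: 1; 1] ++ p ++ [:: 1; 1] ++ p ++ [:: 0] ++ p ++ [:: 1]).
    by rewrite HPB /S3 -!catA.
  have Hus : suffix S3 u by apply: (suffix_le SS Su); rewrite /S3 !size_cat /=; lia.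
  case/suffixP: Hus => u2 Eu2.
  have Eu : u = ([:: 1] ++ p ++ [:: 1; 1]) ++ rev u2.
    by move/eqP: Pu => <-; rewrite Eu2 rev_cat /S3 rev_pal3.
  case/suffixP: Su => Z EZ.
  have E1 : phw (blocks (vk k) ls5 ++ vk k) ++ o10 ++ [:: 1] = (Z ++ [:: 1]) ++ (phw (vk k) ++ o10) ++ ([:: 1; 1] ++ rev u2).
    by rewrite catA (HWp Hp) -catA EZ Eu -Hp -!catA.
  have Hs : size (Z ++ [:: 1]) + size (phw (vk k)) <= size (phw (blocks (vk k) ls5 ++ vk k)).
    have := congr1 size E1; rewrite !size_cat /=; lia.
  have [t [Ht EA]] := occ_p E1 Hs.
  rewrite -Hp in EA.
  have Eu' : u = [:: 1] ++ PB p (drop t ls5) ++ p ++ [:: 1].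
    move: EZ; rewrite (PB_split p t) -EA -!catA => /eqP; rewrite eqseq_cat // => /andP [_ /eqP <-] //.
  move: EA Eu' {E1 Hs EZ Eu Eu2}.
  case: t Ht => [|[|[|[|[|[|//]]]]]] _ EA Eu'.
  + by have := congr1 size EA; rewrite size_cat /= addn1.
  + have := congr1 (last 0) EA; rewrite /PB /= cats0 !last_cat /=; by [].
  +
    move/palP: Pu => Hpu.
    have Hsz : size u = 4 * size p + 8 by rewrite Eu' /PB /= !size_cat /=; lia.
    have N1 : nth 0 u (size p + 3) = 0.
      have -> : u = ([:: 1] ++ p ++ [:: 1; 1]) ++ (p ++ [:: 0] ++ p ++ [:: 1; 1; 1] ++ p ++ [:: 1]).
        by rewrite Eu' /PB /=; repeat rewrite -!catA /=.
      by rewrite nth_at ?(p0 _ Hp) // !size_cat /=; lia.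
    have N2 : nth 0 u (3 * size p + 4) = 1.
      have -> : u = ([:: 1] ++ p ++ [:: 1; 1] ++ p ++ [:: 0] ++ p) ++ ([:: 1; 1; 1] ++ p ++ [:: 1]).
        by rewrite Eu' /PB /=; repeat rewrite -!catA /=.
      by rewrite nth_at // !size_cat /=; lia.
    have := Hpu (size p + 3) ltac:(lia).
    by rewrite N1 Hsz (_ : 4 * size p + 8 - (size p + 3).+1 = 3 * size p + 4) ?N2 //; lia.
  +
    move/palP: Pu => Hpu.
    have Hsz : size u = 3 * size p + 6 by rewrite Eu' /PB /= !size_cat /=; lia.
    have N1 : nth 0 u (size p + 1) = 0.
      have -> : u = ([:: 1] ++ p) ++ ([:: 0] ++ p ++ [:: 1; 1; 1] ++ p ++ [:: 1]).
        by rewrite Eu' /PB /=; repeat rewrite -!catA /=.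
      by rewrite nth_at // !size_cat /=; lia.
    have N2 : nth 0 u (2 * size p + 4) = 1.
      have -> : u = ([:: 1] ++ p ++ [:: 0] ++ p ++ [:: 1; 1]) ++ ([:: 1] ++ p ++ [:: 1]).
        by rewrite Eu' /PB /=; repeat rewrite -!catA /=.
      by rewrite nth_at // !size_cat /=; lia.
    have := Hpu (size p + 1) ltac:(lia).
    by rewrite N1 Hsz (_ : 3 * size p + 6 - (size p + 1).+1 = 2 * size p + 4) ?N2 //; lia.
  + have := congr1 (last 0) EA; rewrite /PB /= cats0 !last_cat /=; by [].
  + by move: Hu; rewrite Eu' /PB /= !size_cat /=; lia.
Qed.

Lemma step_b k (p u : word) : p = phw (vk k) ++ o10 ->
  suffix u (PB p ls5 ++ p ++ [:: 1; 1]) -> pal u -> infix u (PB p ls5 ++ p ++ [:: 1]).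
Proof.
move=> Hp Su Pu.
have Ppal := p_pal Hp.
have Sp : size p = size (phw (vk k)) + 3 by rewrite Hp size_cat.
case: (leqP (size u) (size p + 4)) => Hu.
- set S := [:: 1; 1] ++ p ++ [:: 1; 1].
  have SS : suffix S (PB p ls5 ++ p ++ [:: 1; 1]).
    apply/suffixP; exists (p ++ [:: 0] ++ p ++ [:: 1; 1] ++ p ++ [:: 1; 1] ++ p ++ [:: 0] ++ p ++ [:: 1]).
    by rewrite HPB /S; repeat rewrite -!catA /=.
  have Hus : suffix u S by apply: (suffix_le Su SS); rewrite /S !size_cat /=; lia.
  have PS : pal S by rewrite /pal /S rev_pal3.
  apply: (infix_trans (prefixW (pal_suffix_prefix Pu PS Hus))).
  apply/infixP; exists (p ++ [:: 0] ++ p), (p ++ [:: 0] ++ p ++ [:: 1; 1; 1] ++ p ++ [:: 1]).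
  by rewrite HPB /S; repeat rewrite -!catA /=.
- exfalso.
  set S5 := [:: 1; 1; 1] ++ p ++ [:: 1; 1].
  have SS : suffix S5 (PB p ls5 ++ p ++ [:: 1; 1]).
    apply/suffixP; exists (p ++ [:: 0] ++ p ++ [:: 1; 1] ++ p ++ [:: 1; 1] ++ p ++ [:: 0] ++ p).
    by rewrite HPB /S5; repeat rewrite -!catA /=.
  have Hus : suffix S5 u by apply: (suffix_le SS Su); rewrite /S5 !size_cat /=; lia.
  case/suffixP: Hus => u2 Eu2.
  have Eu : u = ([:: 1; 1] ++ p ++ [:: 1; 1; 1]) ++ rev u2.
    by move/eqP: Pu => <-; rewrite Eu2 rev_cat /S5 rev_pal3.
  case/suffixP: Su => Z EZ.
  have E1 : phw (blocks (vk k) ls5 ++ vk k) ++ o10 ++ [:: 1; 1] = (Z ++ [:: 1; 1]) ++ (phw (vk k) ++ o10) ++ ([:: 1; 1; 1] ++ rev u2).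
    by rewrite catA (HWp Hp) -catA EZ Eu -Hp; repeat rewrite -!catA /=.
  have Hs : size (Z ++ [:: 1; 1]) + size (phw (vk k)) <= size (phw (blocks (vk k) ls5 ++ vk k)).
    have := congr1 size E1; rewrite !size_cat /=; lia.
  have [t [Ht EA]] := occ_p E1 Hs.
  rewrite -Hp in EA.
  have Eu' : u = [:: 1; 1] ++ PB p (drop t ls5) ++ p ++ [:: 1; 1].
    move: EZ; rewrite (PB_split p t) -EA -!catA => /eqP; rewrite eqseq_cat // => /andP [_ /eqP <-] //.
  move: EA Eu' {E1 Hs EZ Eu Eu2}.
  case: t Ht => [|[|[|[|[|[|//]]]]]] _ EA Eu'.
  + by have := congr1 size EA; rewrite size_cat /= addn2.
  + have := congr1 (last 0) EA; rewrite /PB /= cats0 !last_cat /=; by [].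
  +
    move/palP: Pu => Hpu.
    have Hsz : size u = 4 * size p + 10 by rewrite Eu' /PB /= !size_cat /=; lia.
    have N1 : nth 0 u (size p + 4) = 0.
      have -> : u = ([:: 1; 1] ++ p ++ [:: 1; 1]) ++ (p ++ [:: 0] ++ p ++ [:: 1; 1; 1] ++ p ++ [:: 1; 1]).
        by rewrite Eu' /PB /=; repeat rewrite -!catA /=.
      by rewrite nth_at ?(p0 _ Hp) // !size_cat /=; lia.
    have N2 : nth 0 u (3 * size p + 5) = 1.
      have -> : u = ([:: 1; 1] ++ p ++ [:: 1; 1] ++ p ++ [:: 0] ++ p) ++ ([:: 1; 1; 1] ++ p ++ [:: 1; 1]).
        by rewrite Eu' /PB /=; repeat rewrite -!catA /=.
      by rewrite nth_at // !size_cat /=; lia.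
    have := Hpu (size p + 4) ltac:(lia).
    by rewrite N1 Hsz (_ : 4 * size p + 10 - (size p + 4).+1 = 3 * size p + 5) ?N2 //; lia.
  +
    move/palP: Pu => Hpu.
    have Hsz : size u = 3 * size p + 8 by rewrite Eu' /PB /= !size_cat /=; lia.
    have N1 : nth 0 u (size p + 2) = 0.
      have -> : u = ([:: 1; 1] ++ p) ++ ([:: 0] ++ p ++ [:: 1; 1; 1] ++ p ++ [:: 1; 1]).
        by rewrite Eu' /PB /=; repeat rewrite -!catA /=.
      by rewrite nth_at // !size_cat /=; lia.
    have N2 : nth 0 u (2 * size p + 5) = 1.
      have -> : u = ([:: 1; 1] ++ p ++ [:: 0] ++ p ++ [:: 1; 1]) ++ ([:: 1] ++ p ++ [:: 1; 1]).
        by rewrite Eu' /PB /=; repeat rewrite -!catA /=.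
      by rewrite nth_at // !size_cat /=; lia.
    have := Hpu (size p + 2) ltac:(lia).
    by rewrite N1 Hsz (_ : 3 * size p + 8 - (size p + 2).+1 = 2 * size p + 5) ?N2 //; lia.
  + have := congr1 (last 0) EA; rewrite /PB /= cats0 !last_cat /=; by [].
  + by move: Hu; rewrite Eu' /PB /= !size_cat /=; lia.
Qed.


Lemma uk_W k : mkseq tz (6 * 11 ^ k) = (blocks (vk k) ls5 ++ vk k) ++ [:: 2].
Proof. by rewrite uk_eq /blocks /= !cats0 -!catA. Qed.

Definition pk k := phw (vk k) ++ o10.
Definition P0 k := PB (pk k) ls5 ++ pk k.

Lemma phw_uk k : phw (mkseq tz (6 * 11 ^ k)) = P0 k ++ [:: 1; 1; 1].
Proof.
rewrite uk_W phw_cat phw_cons phw_nil cats0 phi_sl catA (HWp (k := k) (erefl _)).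
by rewrite /P0 /pk -catA.
Qed.

Definition X := morph_iword phi vlim.

Lemma iprefix_P0 k j : j <= 3 -> iprefix X (size (P0 k) + j) = P0 k ++ take j [:: 1; 1; 1].
Proof.
move=> Hj; rewrite /X (iprefix_phi (m := 6 * 11 ^ k)); last by rewrite phw_uk size_cat /=; lia.
by rewrite phw_uk take_cat ltnNge leq_addr /= addKn.
Qed.

Lemma defect_P0 k : defect (iprefix X (size (P0 k) + 2)) = (defect (iprefix X (size (P0 k)))).+2.
Proof.
have H0 := @iprefix_P0 k 0 isT; rewrite addn0 take0 cats0 in H0.
rewrite H0 iprefix_P0 //=.
have E1 : P0 k ++ [:: 1; 1] = rcons (P0 k ++ [:: 1]) 1 by rewrite -cats1 -catA.
have E0 : P0 k ++ [:: 1] = rcons (P0 k) 1 by rewrite cats1.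
have Ea : P0 k ++ [:: 1] = PB (pk k) ls5 ++ pk k ++ [:: 1] by rewrite /P0 -catA.
have Eb : rcons (P0 k ++ [:: 1]) 1 = PB (pk k) ls5 ++ pk k ++ [:: 1; 1] by rewrite -E1 /P0 -catA.
rewrite E1 defect_nonew.
  rewrite E0 defect_nonew //.
  move=> u; rewrite -E0 Ea => Su Pu.
  exact: (@step_a k (pk k) u (erefl _) Su Pu).
move=> u; rewrite Eb Ea => Su Pu.
exact: (@step_b k (pk k) u (erefl _) Su Pu).
Qed.

Lemma defect_X_mono a b : a <= b -> defect (iprefix X a) <= defect (iprefix X b).
Proof.
move=> Hab; rewrite -(subnKC Hab); elim: (b - a) => [|d IH]; first by rewrite addn0.
rewrite addnS /iprefix mkseqS; apply: (leq_trans IH); apply: defect_mono.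
Qed.

Lemma size_phw_mono m n : m <= n -> size (phw (mkseq tz m)) + 4 * (n - m) <= size (phw (mkseq tz n)).
Proof.
move=> Hmn; have /prefixP [r Er] := mkseq_prefix tz Hmn.
rewrite Er phw_cat size_cat.
have := size_phw_ge r; have := congr1 size Er; rewrite size_cat !size_mkseq => H1 H2; set s := size r in H1 H2; lia.
Qed.

Lemma size_P0_grow k : size (P0 k) + 2 <= size (P0 k.+1).
Proof.
have Hk1 : size (phw (mkseq tz (6 * 11 ^ k.+1 - 1))) + 3 = size (P0 k.+1).
  rewrite /P0 /pk -(HWp (k := k.+1) (erefl _)) W_eq size_cat //.
have H0 : size (phw (mkseq tz (6 * 11 ^ k))) = size (P0 k) + 3 by rewrite phw_uk size_cat.
have HK := pos11 k.
have Hp : 11 ^ k.+1 = 11 * 11 ^ k by rewrite expnS.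
have := @size_phw_mono (6 * 11 ^ k) (6 * 11 ^ k.+1 - 1); rewrite Hp in Hk1 *.
move=> /(_ ltac:(lia)); lia.
Qed.

Lemma defect_grow k : 2 * k.+1 <= defect (iprefix X (size (P0 k) + 2)).
Proof.
elim: k => [|k IH]; first by rewrite defect_P0.
rewrite defect_P0.
have := defect_X_mono (size_P0_grow k); lia.
Qed.

Lemma inf_defect : infinite_defect (morph_iword phi vlim).
Proof.
move=> m; exists (size (P0 m) + 2); have := defect_grow m; rewrite /X; lia.
Qed.

Theorem proposition5p8 :
  (forall i, prefix (vfin i) (vfin i.+1)) /\
  (forall i n, n < size (vfin i) -> vlim n = nth 0 (vfin i) n) /\
  rich vlim /\
  infinite_defect (morph_iword phi vlim).
Proof.
split.
  move=> i /=; rewrite /pclos -catA; exact: prefix_prefix.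
split.
  move=> i n Hn; rewrite vlim_tz vfin_eq /vk nth_mkseq //.
  by move: Hn; rewrite vfin_eq size_mkseq.
split; [exact: rich_vlim | exact: inf_defect].
Qed.
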